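(* Assume the standing assumptions (A1) and (A2) below. Let $x^+\in D\cap\ell^1_{\overline{r}}$ and $t\in(0,1)$, and for each $\alpha>0$ let $x_\alpha\in\operatorname{argmin}_{x\in D}\left[\frac12\|F(x^+)-F(x)\|_{\mathbb{Y}}^2+\alpha\|x\|_{\overline{r},1}\right]$. The following are equivalent: (i) $x^+\in k_t$; (ii) there is $C_2>0$ with $\|x^+-x_\alpha\|_{\overline{r},1}\le C_2\alpha^{1-t}$ for all $\alpha>0$; (iii) there is $C_3>0$ with $\|F(x^+)-F(x_\alpha)\|_{\mathbb{Y}}\le C_3\alpha^{\frac{2-t}{2}}$ for all $\alpha>0$. More precisely, there is a constant $c>0$ depending only on $L$ and $t$ such that one can choose $C_2=c\|x^+\|_{k_t}^t$ in (ii), $C_3=\sqrt{2C_2}$ in (iii), and (iii) implies $\|x^+\|_{k_t}\le cC_3^{2/t}$.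
   Context: $\Lambda$ is a countable index set. For a sequence $\omega$ of positive reals and $p\in(0,\infty)$, $\|x\|_{\omega,p}=\left(\sum_{j\in\Lambda}\omega_j^p|x_j|^p\right)^{1/p}$ (possibly $+\infty$) and $\ell^p_\omega=\{x\in\mathbb{R}^\Lambda:\|x\|_{\omega,p}<\infty\}$. For $t\in(0,2)$, $k_t=\{x:\|x\|_{k_t}<\infty\}$ with $\|x\|_{k_t}=\sup_{\alpha>0}\alpha\left(\sum_{j}\overline{a}_j^{-2}\overline{r}_j^2\mathbf{1}_{\{\overline{a}_j^{-2}\overline{r}_j\alpha<|x_j|\}}\right)^{1/t}$. (A1): $\overline{a},\overline{r}$ are sequences of positive reals indexed by $\Lambda$ such that for every $\varepsilon>0$ all but finitely many $j$ satisfy $\overline{a}_j\overline{r}_j^{-1}\le\varepsilon$; $\mathbb{Y}$ is a Banach space; $D\subseteq\ell^2_{\overline{a}}$ is closed with $D\cap\ell^1_{\overline{r}}\ne\emptyset$; $F:D\to\mathbb{Y}$ and there is $L>0$ with $L^{-1}\|x^{(1)}-x^{(2)}\|_{\overline{a},2}\le\|F(x^{(1)})-F(x^{(2)})\|_{\mathbb{Y}}\le L\|x^{(1)}-x^{(2)}\|_{\overline{a},2}$ for all $x^{(1)},x^{(2)}\in D$. (A2): if $x\in D$ and $z\in\ell^2_{\overline{a}}$ with $|z_j|\le|x_j|$ for all $j$, then $z\in D$. *)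

(* Defs.v *)
From HB Require Import structures.
From mathcomp Require Import all_boot all_order all_algebra.
From mathcomp Require Import all_classical all_reals all_analysis.
Set Implicit Arguments. Unset Strict Implicit. Unset Printing Implicit Defensive.
Import Order.TTheory GRing.Theory Num.Theory.
Import numFieldNormedType.Exports.
Local Open Scope classical_set_scope.
Local Open Scope ring_scope.

Section Defs.
Context {R : realType} {Lam : countType}.

Definition wnorm (w : Lam -> R) (p : R) (x : Lam -> R) : \bar R :=
  poweR (\esum_(j in [set: Lam]) ((w j * `|x j|) `^ p)%:E) p^-1.

Definition in_lp (w : Lam -> R) (p : R) (x : Lam -> R) : Prop :=
  (wnorm w p x < +oo)%E.

Definition kt_sum (a r : Lam -> R) (x : Lam -> R) (alpha : R) : \bar R :=
  \esum_(j in [set j | (a j)^-2 * r j * alpha < `|x j|])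
     ((a j)^-2 * (r j) ^+ 2)%:E.

Definition kt_norm (a r : Lam -> R) (t : R) (x : Lam -> R) : \bar R :=
  ereal_sup [set (alpha%:E * poweR (kt_sum a r x alpha) t^-1)%E
            | alpha in [set alpha : R | 0 < alpha]].

Definition in_kt (a r : Lam -> R) (t : R) (x : Lam -> R) : Prop :=
  (kt_norm a r t x < +oo)%E.

Definition closed_l2 (a : Lam -> R) (D : set (Lam -> R)) : Prop :=
  forall (u : nat -> Lam -> R) (x : Lam -> R),
    (forall n, D (u n)) -> in_lp a 2 x ->
    (wnorm a 2 (u n \- x)%R @[n --> \oo] --> 0%E) -> D x.

Definition A1 {Y : completeNormedModType R} (a r : Lam -> R)
  (D : set (Lam -> R)) (F : (Lam -> R) -> Y) (L : R) : Prop :=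
  [/\ (forall j, 0 < a j) /\ (forall j, 0 < r j),
      (forall eps : R, 0 < eps -> finite_set [set j | ~ (a j / r j <= eps)]),
      (D `<=` in_lp a 2) /\ closed_l2 a D /\ (D `&` in_lp r 1 !=set0),
      0 < L &
      (forall x1 x2, D x1 -> D x2 ->
         ((L^-1)%:E * wnorm a 2 (x1 \- x2)%R <= (`|F x1 - F x2|)%:E)%E /\
         ((`|F x1 - F x2|)%:E <= L%:E * wnorm a 2 (x1 \- x2)%R)%E)].

Definition A2 (a : Lam -> R) (D : set (Lam -> R)) : Prop :=
  forall x z, D x -> in_lp a 2 z -> (forall j, `|z j| <= `|x j|) -> D z.

Definition tikh {Y : completeNormedModType R} (r : Lam -> R)
  (F : (Lam -> R) -> Y) (xp : Lam -> R) (alpha : R) (x : Lam -> R) : \bar R :=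
  ((2^-1 * `|F xp - F x| ^+ 2)%:E + alpha%:E * wnorm r 1 x)%E.

Definition is_argmin {Y : completeNormedModType R} (r : Lam -> R)
  (D : set (Lam -> R)) (F : (Lam -> R) -> Y) (xp : Lam -> R) (alpha : R)
  (x : Lam -> R) : Prop :=
  D x /\ forall z, D z -> (tikh r F xp alpha x <= tikh r F xp alpha z)%E.

End Defs.

(* Main.v *)
Require Import Defs.
From HB Require Import structures.
From mathcomp Require Import all_boot all_order all_algebra.
From mathcomp Require Import all_classical all_reals all_analysis.
From mathcomp Require Import finmap.
From mathcomp Require Import ring lra.
Import Order.TTheory GRing.Theory Num.Theory.
Import numFieldNormedType.Exports.
Local Open Scope classical_set_scope.
Local Open Scope ring_scope.

Section Aux.
Context {R : realType} {Lam : countType}.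

Lemma esum_le_seq (S : set Lam) (f : Lam -> R) (B : R) :
  (forall s : seq Lam, uniq s -> (forall j, j \in s -> S j) ->
     \sum_(j <- s) f j <= B) ->
  (\esum_(j in S) (f j)%:E <= B%:E)%E.
Proof.
move=> H; apply: ge_ereal_sup => _ [X [finX XS] <-].
rewrite fsbig_finite// sumEFin lee_fin; apply: H.
- exact: fset_uniq.
- by move=> j; rewrite in_fset_set// => /set_mem /XS.
Qed.

Lemma seq_le_esum (S : set Lam) (f : Lam -> R) (s : seq Lam) :
  uniq s -> (forall j, j \in s -> S j) ->
  ((\sum_(j <- s) f j)%:E <= \esum_(j in S) (f j)%:E)%E.
Proof.
move=> us sS; apply: esum_ge; exists [set` s].
  by split; [exact: finite_seq| move=> j /= /sS].
by rewrite -fsbig_seq// sumEFin.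
Qed.

Lemma wnorm1E (w x : Lam -> R) : (forall j, 0 <= w j) ->
  wnorm w 1 x = \esum_(j in [set: Lam]) (w j * `|x j|)%:E.
Proof.
move=> w0; rewrite /wnorm invr1 poweRe1; last first.
  by apply: esum_ge0 => j _; rewrite lee_fin powR_ge0.
by apply: eq_esum => j _; rewrite powRr1 // mulr_ge0.
Qed.

Lemma wnorm2E (w x : Lam -> R) : (forall j, 0 <= w j) ->
  wnorm w 2 x = poweR (\esum_(j in [set: Lam]) ((w j * `|x j|) ^+ 2)%:E) 2^-1.
Proof.
move=> w0; rewrite /wnorm; congr poweR; apply: eq_esum => j _.
by rewrite powR_mulrn // mulr_ge0.
Qed.

Lemma poweR2_le (Q : \bar R) (b : R) : (0 <= Q)%E -> 0 <= b ->
  (poweR Q 2^-1 <= b%:E)%E -> (Q <= (b ^+ 2)%:E)%E.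
Proof.
case: Q => [q| |] //=.
- rewrite !lee_fin => q0 b0; rewrite powR12_sqrt // => h.
  have := sqr_sqrtr q0; have := sqrtr_ge0 q; nra.
- by move=> _ _; have -> : (2^-1 == 0 :> R) = false by rewrite invr_eq0 pnatr_eq0.
Qed.

Lemma poweR2_ge (Q : \bar R) (b : R) : (0 <= Q)%E -> 0 <= b ->
  (Q <= (b ^+ 2)%:E)%E -> (poweR Q 2^-1 <= b%:E)%E.
Proof.
case: Q => [q| |] //=.
rewrite !lee_fin => q0 b0 h; rewrite powR12_sqrt //.
by rewrite -(ger0_norm b0) -sqrtr_sqr ler_sqrt // exprn_ge0.
Qed.

Lemma esum_fin_supp (g : Lam -> R) (s : seq Lam) : uniq s ->
  (forall j, 0 <= g j) -> (forall j, j \notin s -> g j = 0) ->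
  \esum_(j in [set: Lam]) (g j)%:E = (\sum_(j <- s) g j)%:E.
Proof.
move=> us g0 gs.
transitivity (\esum_(j in [set: Lam]) (if j \in [set` s] then (g j)%:E else 0%E)).
  apply: eq_esum => j _; case: ifP => // h; rewrite gs //; apply/negP => js; move/negP: h; apply; rewrite mem_setE; exact: js.
rewrite -esum_mkcond esum_fset ?finite_seq //; last by move=> j _; rewrite lee_fin.
  by rewrite -fsbig_seq // sumEFin.
exact: finite_seq.
Qed.

Lemma lip_lower_Q (L e : R) (w d : Lam -> R) : 0 < L -> 0 <= e ->
  (forall j, 0 <= w j) ->
  ((L^-1)%:E * wnorm w 2 d <= e%:E)%E ->
  (\esum_(j in [set: Lam]) ((w j * `|d j|) ^+ 2)%:E <= ((L * e) ^+ 2)%:E)%E.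
Proof.
move=> L0 e0 w0; rewrite lee_pdivrMl // wnorm2E // => h.
apply: poweR2_le => //.
  by apply: esum_ge0 => j _; rewrite lee_fin sqr_ge0.
by rewrite mulr_ge0 // ltW.
Qed.

Lemma geo_le (q : R) N : 0 <= q < 1 -> \sum_(k < N) q ^+ k <= (1 - q)^-1.
Proof.
move=> /andP[q0 q1].
have e : (1 - q) * \sum_(k < N) q ^+ k = 1 - q ^+ N.
  elim: N => [|N IH]; first by rewrite big_ord0 mulr0 expr0 subrr.
  by rewrite big_ord_recr /= mulrDr IH exprS; ring.
have q1' : 0 < 1 - q by rewrite subr_gt0.
rewrite -(ler_pM2l q1') e mulrV ?unitfE ?gt_eqF //.
by rewrite lerBlDr lerDl exprn_ge0.
Qed.

Lemma layer_scalar (g u : R) N : 0 < g -> u <= g -> g * (2^-1) ^+ N < u ->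
  u <= \sum_(k < N) (if g * (2^-1) ^+ k.+1 < u then g * (2^-1) ^+ k else 0).
Proof.
move=> g0 ug; elim: N => [|N IH]; first by rewrite expr0 mulr1 => h; have := lt_le_trans h ug; rewrite ltxx.
move=> h; rewrite big_ord_recr /=.
have t0 : forall k : 'I_N, 0 <= (if g * (2^-1) ^+ k.+1 < u then g * (2^-1) ^+ k else 0).
  by move=> k; case: ifP => // _; rewrite mulr_ge0 // ?ltW // exprn_ge0.
case: (ltP (g * (2^-1) ^+ N) u) => hN.
  rewrite (le_trans (IH hN)) // lerDl; case: ifP => // _.
  by rewrite mulr_ge0 // ?ltW // exprn_ge0.
by rewrite h ler_wpDl // sumr_ge0.
Qed.

Lemma w_ge0 (a r : Lam -> R) j : 0 <= (a j)^-2 * r j ^+ 2.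
Proof. by rewrite mulr_ge0 // ?invr_ge0 sqr_ge0. Qed.

Lemma kt_sum_ge0 (a r xp : Lam -> R) b : (0 <= kt_sum a r xp b)%E.
Proof. by apply: esum_ge0 => j _; rewrite lee_fin w_ge0. Qed.

Lemma kt_fin_bound (a r xp : Lam -> R) (t K b : R) : 0 < t -> 0 < b ->
  (kt_norm a r t xp <= K%:E)%E -> forall s, uniq s ->
  (forall j, j \in s -> (a j)^-2 * r j * b < `|xp j|) ->
  \sum_(j <- s) (a j)^-2 * r j ^+ 2 <= (K / b) `^ t.
Proof.
move=> t0 b0 hK s us hs.
set sg := \sum_(j <- s) _.
have sg0 : 0 <= sg by apply: sumr_ge0 => j _; exact: w_ge0.
have h1 : (sg%:E <= kt_sum a r xp b)%E.
  by rewrite /kt_sum; apply: seq_le_esum => // j /hs.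
have h2 : (b%:E * poweR (kt_sum a r xp b) t^-1 <= K%:E)%E.
  apply: le_trans hK; apply: ereal_sup_ubound; exists b => //.
have h3 : (poweR sg%:E t^-1 <= poweR (kt_sum a r xp b) t^-1)%E.
  apply: gt0_ler_poweR => //; first by rewrite invr_ge0 ltW.
    by rewrite in_itv /= lee_fin sg0 leey.
  by rewrite in_itv /= kt_sum_ge0 leey.
have h4 : (b * sg `^ t^-1 <= K).
  rewrite -lee_fin EFinM -poweR_EFin; apply: le_trans h2.
  by apply: lee_wpmul2l => //; rewrite lee_fin ltW.
have h5 : sg `^ t^-1 <= K / b by rewrite ler_pdivlMr // mulrC.
have -> : sg = (sg `^ t^-1) `^ t by rewrite -powRrM mulVf ?gt_eqF // powRr1.
apply: ge0_ler_powR => //; first exact: ltW.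
  by rewrite nnegrE powR_ge0.
rewrite nnegrE; exact: le_trans (powR_ge0 _ _) h5.
Qed.

Lemma powR_exprn (x t : R) n : 0 <= x -> (x ^+ n) `^ t = (x `^ t) ^+ n.
Proof.
move=> x0; elim: n => [|n IH]; first by rewrite !expr0 powR1.
by rewrite !exprS powRM ?exprn_ge0 // IH.
Qed.

Lemma powR_invr (x t : R) : 0 < x -> (x^-1) `^ t = (x `^ t)^-1.
Proof.
move=> x0; rewrite -powR_inv1 ?ltW // -powRrM mulN1r powRN //.
Qed.

Lemma two_powR_lt (t : R) : t < 1 -> 2 `^ t < 2.
Proof.
move=> t1; rewrite /powR pnatr_eq0 /=.
rewrite -[X in _ < X]lnK ?posrE // ltr_expR gtr_pMl ?ln_gt0 ?ltr1n //.
Qed.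

Lemma layer_term (K t al : R) k : 0 < al -> 0 <= K ->
  al * (2^-1) ^+ k * (K / (al * (2^-1) ^+ k.+1)) `^ t =
  K `^ t * al `^ (1 - t) * 2 `^ t * (2 `^ t / 2) ^+ k.
Proof.
move=> al0 K0.
have h2 : 0 < 2 ^+ k :> R by rewrite exprn_gt0.
have h3 : 0 < 2 ^+ k.+1 :> R by rewrite exprn_gt0.
rewrite !exprVn invfM invrK.
rewrite (powRM _ K0); last by rewrite mulr_ge0 ?invr_ge0 ?(ltW al0) ?(ltW h3).
have ai : 0 <= al^-1 by rewrite invr_ge0 ltW.
rewrite (powRM _ ai (ltW h3)).
rewrite powR_invr // powR_exprn // exprS.
rewrite powRB; last by rewrite (gt_eqF al0) implybT.
rewrite powRr1; last exact: ltW.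
rewrite exprMn exprVn.
have p1 : 0 < al `^ t by rewrite powR_gt0.
have p2 : 0 < 2 `^ t :> R by rewrite powR_gt0.
field.
by rewrite !gt_eqF.
Qed.

Lemma layer_sum (a r xp : Lam -> R) (K t al : R) : 0 < t < 1 -> 0 < al ->
  0 <= K -> (forall j, 0 < a j) -> (forall j, 0 < r j) ->
  (kt_norm a r t xp <= K%:E)%E -> forall s, uniq s ->
  \sum_(j <- s | ~~ ((a j)^-2 * r j * al < `|xp j|)) r j * `|xp j| <=
  2 `^ t / (1 - 2 `^ t / 2) * K `^ t * al `^ (1 - t).
Proof.
move=> /andP[t0 t1] al0 K0 a0 r0 hK s us.
pose g j := (a j)^-2 * r j * al.
have g0 j : 0 < g j by rewrite /g !mulr_gt0 // invr_gt0 exprn_gt0.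
pose N := \max_(j <- s) (Num.truncn (g j / `|xp j|)).+1.
pose f j (k : nat) := if g j * (2^-1) ^+ k.+1 < `|xp j|
  then r j * (g j * (2^-1) ^+ k) else 0.
have f0 j k : 0 <= f j k.
  rewrite /f; case: ifP => // _.
  apply: mulr_ge0; first exact: ltW.
  by apply: mulr_ge0; [exact: ltW | apply: exprn_ge0; rewrite invr_ge0].
have hj j : j \in s -> ~~ (g j < `|xp j|) ->
    r j * `|xp j| <= \sum_(k < N) f j k.
  move=> js; rewrite -leNgt => hn.
  case: (eqVneq (xp j) 0) => [->|xj0].
    by rewrite normr0 mulr0 sumr_ge0.
  have u0 : 0 < `|xp j| by rewrite normr_gt0.
  have hN : g j * (2^-1) ^+ N < `|xp j|.
    have hle : ((Num.truncn (g j / `|xp j|)).+1 <= N)%N.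
      exact: (@leq_bigmax_seq _ s xpredT (fun j => (Num.truncn (g j / `|xp j|)).+1) j).
    have h1 : g j / `|xp j| < 2 ^+ N.
      apply: (lt_le_trans (archimedean.Num.Theory.truncnS_gt _)).
      apply: (le_trans (y := N%:R)); first by rewrite ler_nat.
      by rewrite -natrX ler_nat ltnW // ltn_expl.
    rewrite exprVn mulrC ltr_pdivrMl ?exprn_gt0 //.
    by rewrite -ltr_pdivrMr.
  have h := layer_scalar _ _ _ (g0 j) hn hN.
  have -> : \sum_(k < N) f j k = r j * \sum_(k < N)
      (if g j * (2^-1) ^+ k.+1 < `|xp j| then g j * (2^-1) ^+ k else 0).
    by rewrite mulr_sumr; apply: eq_bigr => k _; rewrite /f; case: ifP; rewrite ?mulr0.
  by rewrite ler_wpM2l // ltW.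
apply: (le_trans (y := \sum_(j <- s | ~~ (g j < `|xp j|)) \sum_(k < N) f j k)).
  rewrite big_seq_cond [X in _ <= X]big_seq_cond; apply: ler_sum => j /andP[js hn].
  exact: hj.
apply: (le_trans (y := \sum_(j <- s) \sum_(k < N) f j k)).
  rewrite [X in _ <= X](bigID (fun j => ~~ (g j < `|xp j|))) /= lerDl.
  by apply: sumr_ge0 => j _; exact: sumr_ge0.
rewrite exchange_big /=.
pose q := 2 `^ t / 2 : R.
apply: (le_trans (y := \sum_(k < N) K `^ t * al `^ (1 - t) * 2 `^ t * q ^+ k)).
  apply: ler_sum => k _; rewrite -layer_term //.
  have -> : \sum_(j <- s) f j k = al * (2^-1) ^+ k *
      \sum_(j <- [seq j <- s | (a j)^-2 * r j * (al * (2^-1) ^+ k.+1) < `|xp j|])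
        (a j)^-2 * r j ^+ 2.
    rewrite big_filter mulr_sumr [in RHS]big_mkcond; apply: eq_bigr => j _.
    rewrite /f /g !mulrA; case: ifP; rewrite ?mulr0 // => _; ring.
  apply: ler_wpM2l; first by apply: mulr_ge0; [exact: ltW | apply: exprn_ge0].
  apply: (kt_fin_bound a r xp) => //; first by rewrite mulr_gt0 ?exprn_gt0.
    exact: filter_uniq.
  by move=> j; rewrite mem_filter => /andP[].
rewrite -mulr_sumr.
have q0 : 0 <= q by rewrite /q divr_ge0 ?powR_ge0.
have q1 : q < 1 by rewrite /q ltr_pdivrMr // mul1r two_powR_lt.
have hg : \sum_(k < N) q ^+ k <= (1 - q)^-1 by apply: geo_le; rewrite q0 q1.
have c0 : 0 <= K `^ t * al `^ (1 - t) * 2 `^ t by rewrite !mulr_ge0 ?powR_ge0.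
apply: (le_trans (ler_wpM2l c0 hg)).
rewrite -/q le_eqVlt; apply/orP; left; apply/eqP; ring.
Qed.

Lemma amgm (a r c l : R) : 0 < a -> 0 < l ->
  r * c <= l / 2 * ((a)^-2 * r ^+ 2) + (2 * l)^-1 * (a * c) ^+ 2.
Proof.
move=> a0 l0.
have key : l / 2 * ((a)^-2 * r ^+ 2) + (2 * l)^-1 * (a * c) ^+ 2 - r * c =
    (2 * l)^-1 * (l * r / a - a * c) ^+ 2.
  by field; rewrite !gt_eqF.
by rewrite -subr_ge0 key mulr_ge0 ?sqr_ge0 // invr_ge0 mulr_ge0 // ltW.
Qed.

Lemma al_powR (K al t : R) : 0 <= K -> 0 < al ->
  al * (K / al) `^ t = K `^ t * al `^ (1 - t).
Proof.
move=> K0 al0.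
rewrite powRM // ?invr_ge0 ?ltW // powR_invr //.
rewrite powRB; last by rewrite (gt_eqF al0) implybT.
rewrite powRr1 ?ltW //.
have : 0 < al `^ t by rewrite powR_gt0.
by move=> p; field; rewrite gt_eqF.
Qed.

Lemma wnorm1_ge0 (w x : Lam -> R) : (0 <= wnorm w 1 x)%E.
Proof. exact: poweR_ge0. Qed.

Lemma wnorm1_fin (w x : Lam -> R) : in_lp w 1 x -> exists n : R,
  0 <= n /\ wnorm w 1 x = n%:E.
Proof.
rewrite /in_lp; have := wnorm1_ge0 w x.
case: (wnorm w 1 x) => [n| |] //= n0 _; exists n; split => //.
Qed.

Definition Cl (t : R) : R := 2 `^ t / (1 - 2 `^ t / 2).

Lemma Cl_gt0 (t : R) : t < 1 -> 0 < Cl t.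
Proof.
move=> t1; rewrite /Cl divr_gt0 ?powR_gt0 // subr_gt0.
by rewrite ltr_pdivrMr // mul1r two_powR_lt.
Qed.

Lemma part_ii {Y : completeNormedModType R} (a r : Lam -> R)
  (D : set (Lam -> R)) (F : (Lam -> R) -> Y) (L t K al : R) (xp x : Lam -> R) :
  0 < L -> 0 < t < 1 -> 0 < al -> 0 <= K ->
  (forall j, 0 < a j) -> (forall j, 0 < r j) ->
  ((L^-1)%:E * wnorm a 2 (xp \- x)%R <= (`|F xp - F x|)%:E)%E ->
  in_lp r 1 xp -> is_argmin r D F xp al x -> D xp ->
  (kt_norm a r t xp <= K%:E)%E ->
  (wnorm r 1 (xp \- x)%R <=
     ((2 * L ^+ 2 + 2 * Cl t) * K `^ t * al `^ (1 - t))%:E)%E.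
Proof.
move=> L0 tt al0 K0 a0 r0 hlow hxp [Dx hmin] Dxp hK.
have ht := tt; move/andP: tt => [t0 t1].
set e := `|F xp - F x|.
have e0 : 0 <= e := normr_ge0 _.
have a0' : forall j, 0 <= a j by move=> j; exact: ltW.
have r0' : forall j, 0 <= r j by move=> j; exact: ltW.
have hQ := lip_lower_Q _ _ _ _ L0 e0 a0' hlow.
have [np [np0 Enp]] := wnorm1_fin _ _ hxp.
have htk := hmin xp Dxp.
rewrite /tikh in htk.
have E0 : `|F xp - F xp| ^+ 2 = 0 by rewrite subrr normr0 expr2 mulr0.
rewrite E0 mulr0 add0e Enp -/e in htk.
have [nx [nx0 Enx]] : exists nx, 0 <= nx /\ wnorm r 1 x = nx%:E.
  move: htk; have := wnorm1_ge0 r x.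
  case: (wnorm r 1 x) => [n| |] //= n0 h.
  - by exists n; split => //; rewrite -lee_fin.
  - by move: h; rewrite gt0_muley ?lte_fin // addey // leNgt -EFinM ltry.
rewrite Enx -EFinM -EFinM -EFinD lee_fin in htk.
pose g j := if (a j)^-2 * r j * al < `|xp j| then r j * `|xp j - x j|
  else r j * `|xp j|.
have hE : (wnorm r 1 xp + wnorm r 1 (xp \- x)%R <=
           wnorm r 1 x + \esum_(j in [set: Lam]) (2 * g j)%:E)%E.
  rewrite !wnorm1E // -!esumD; first last.
  - by move=> j _; rewrite lee_fin mulr_ge0.
  - by move=> j _; rewrite lee_fin mulr_ge0.
  - by move=> j _; rewrite lee_fin /g; case: ifP => _; rewrite !mulr_ge0.
  - by move=> j _; rewrite lee_fin mulr_ge0.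
  apply: le_esum => j _; rewrite -EFinD lee_fin /=.
  have h1 : `|xp j| <= `|x j| + `|xp j - x j|.
    by have := ler_normD (x j) (xp j - x j); rewrite addrC subrK.
  have h2 := ler_normB (xp j) (x j).
  have := r0 j; rewrite /g; case: ifP => _ rj; nra.
set lam := 2 * al * L ^+ 2.
have lam0 : 0 < lam by rewrite /lam !mulr_gt0 // exprn_gt0.
have hG : (\esum_(j in [set: Lam]) (2 * g j)%:E <=
    (2 * (al * L ^+ 2 * (K / al) `^ t + e ^+ 2 / (4 * al)
          + Cl t * K `^ t * al `^ (1 - t)))%:E)%E.
  apply: esum_le_seq => s us _.
  rewrite -mulr_sumr ler_wpM2l //.
  rewrite (bigID (fun j => (a j)^-2 * r j * al < `|xp j|)) /=.
  apply: lerD; last first.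
    rewrite (eq_bigr (fun j => r j * `|xp j|)); last first.
      by move=> j /negbTE hj; rewrite /g hj.
    exact: layer_sum.
  rewrite (eq_bigr (fun j => r j * `|xp j - x j|)); last first.
    by move=> j hj; rewrite /g hj.
  apply: (le_trans (y := \sum_(j <- s | (a j)^-2 * r j * al < `|xp j|)
     (lam / 2 * ((a j)^-2 * r j ^+ 2) + (2 * lam)^-1 * (a j * `|xp j - x j|) ^+ 2))).
    by apply: ler_sum => j _; apply: amgm.
  rewrite big_split /= -!mulr_sumr.
  have hs1 : \sum_(j <- s | (a j)^-2 * r j * al < `|xp j|) (a j)^-2 * r j ^+ 2
      <= (K / al) `^ t.
    rewrite -big_filter; apply: (kt_fin_bound a r xp) => //.
      exact: filter_uniq.
    by move=> j; rewrite mem_filter => /andP[].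
  have hs2 : \sum_(j <- s | (a j)^-2 * r j * al < `|xp j|)
      (a j * `|xp j - x j|) ^+ 2 <= (L * e) ^+ 2.
    apply: (le_trans (y := \sum_(j <- s) (a j * `|xp j - x j|) ^+ 2)).
      rewrite [X in _ <= X](bigID (fun j => (a j)^-2 * r j * al < `|xp j|)) /=.
      by rewrite lerDl sumr_ge0 // => j _; rewrite sqr_ge0.
    rewrite -lee_fin; apply: le_trans hQ.
    exact: (seq_le_esum setT (fun j => (a j * `|xp j - x j|) ^+ 2) s us).
  apply: (le_trans (lerD (ler_wpM2l _ hs1) (ler_wpM2l _ hs2))).
  - by rewrite divr_ge0 // ltW.
  - by rewrite invr_ge0 mulr_ge0 // ltW.
  rewrite le_eqVlt; apply/orP; left; apply/eqP; rewrite /lam.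
  by field; rewrite !gt_eqF.
have hF := le_trans hE (leeD2l _ hG).
rewrite Enp Enx -EFinD in hF.
move: hF; have := wnorm1_ge0 r (xp \- x)%R.
case: (wnorm r 1 (xp \- x)%R) => [nd| |] //= nd0.
rewrite -EFinD !lee_fin => hF.
have hZ := al_powR _ _ t K0 al0.
set P := (K / al) `^ t in hF hZ.
set Z := K `^ t * al `^ (1 - t) in hZ *.
have h3 : e ^+ 2 / (4 * al) * 2 <= np - nx.
  rewrite mulrAC ler_pdivrMr ?mulr_gt0 //; lra.
rewrite -mulrA -/Z.
rewrite -(mulrA (Cl t)) -/Z in hF.
have E1 : al * L ^+ 2 * P = L ^+ 2 * Z by rewrite -hZ; ring.
rewrite E1 in hF.
lra.
Qed.

Lemma argmin_fin {Y : completeNormedModType R} (r : Lam -> R)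
  (D : set (Lam -> R)) (F : (Lam -> R) -> Y) (al : R) (xp x : Lam -> R) :
  0 < al -> in_lp r 1 xp -> is_argmin r D F xp al x -> D xp ->
  exists np nx, [/\ 0 <= np, 0 <= nx, wnorm r 1 xp = np%:E, wnorm r 1 x = nx%:E &
    2^-1 * `|F xp - F x| ^+ 2 + al * nx <= al * np].
Proof.
move=> al0 hxp [Dx hmin] Dxp.
have [np [np0 Enp]] := wnorm1_fin _ _ hxp.
have htk := hmin xp Dxp.
rewrite /tikh in htk.
have E0 : `|F xp - F xp| ^+ 2 = 0 by rewrite subrr normr0 expr2 mulr0.
rewrite E0 mulr0 add0e Enp in htk.
have [nx [nx0 Enx]] : exists nx, 0 <= nx /\ wnorm r 1 x = nx%:E.
  move: htk; have := wnorm1_ge0 r x.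
  case: (wnorm r 1 x) => [n| |] //= n0 h.
  - by exists n; split => //; rewrite -lee_fin.
  - by move: h; rewrite gt0_muley ?lte_fin // addey // leNgt -EFinM ltry.
rewrite Enx -EFinM -EFinM -EFinD lee_fin in htk.
by exists np, nx; split.
Qed.

Lemma group2 {Y : completeNormedModType R} (a r : Lam -> R)
  (D : set (Lam -> R)) (F : (Lam -> R) -> Y) (L tau : R) (xp x : Lam -> R) :
  0 < L -> 0 < tau -> (forall j, 0 < a j) -> (forall j, 0 < r j) ->
  (D `<=` in_lp a 2) -> A2 a D ->
  (forall x1 x2, D x1 -> D x2 ->
     ((`|F x1 - F x2|)%:E <= L%:E * wnorm a 2 (x1 \- x2)%R)%E) ->
  D xp -> in_lp r 1 xp -> is_argmin r D F xp tau x ->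
  forall s, uniq s -> (forall j, j \in s -> (a j)^-2 * r j * tau / 2 < `|x j|) ->
  tau ^+ 2 * \sum_(j <- s) (a j)^-2 * r j ^+ 2 <= 4 * (L * `|F xp - F x|) ^+ 2.
Proof.
move=> L0 tau0 a0 r0 hDl hA2 hup Dxp hxp hmin s us hs.
have a0' : forall j, 0 <= a j by move=> j; exact: ltW.
have r0' : forall j, 0 <= r j by move=> j; exact: ltW.
have [np [nx [np0 nx0 Enp Enx htk]]] := argmin_fin r D F tau xp x tau0 hxp hmin Dxp.
case: hmin => Dx hmin.
set e := `|F xp - F x| in htk *.
have e0 : 0 <= e := normr_ge0 _.
pose sg := (2 + L ^+ 2)^-1.
have sg0 : 0 < sg by rewrite /sg invr_gt0 addr_gt0 // exprn_gt0.
have sg1 : sg <= 2^-1.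
  by rewrite /sg lef_pV2 ?posrE ?addr_gt0 ?exprn_gt0 // lerDl sqr_ge0.
have sgL : sg * L ^+ 2 <= 1.
  rewrite /sg mulrC -ler_pdivlMr ?invr_gt0 ?addr_gt0 ?exprn_gt0 //.
  by rewrite invrK mul1r lerDr.
pose th j := (a j)^-2 * r j.
have th0 j : 0 < th j by rewrite /th mulr_gt0 // invr_gt0 exprn_gt0.
pose dl j := sg * (th j * tau).
have dl0 j : 0 < dl j by apply: mulr_gt0 => //; exact: mulr_gt0.
have dlx j : j \in s -> dl j < `|x j|.
  move=> /hs h; apply: le_lt_trans h; rewrite /dl /th.
  rewrite [X in _ <= X]mulrC ler_wpM2r // ?mulr_ge0 // ?invr_ge0 ?sqr_ge0 //.
  by rewrite ltW.
pose z j := if j \in s then x j * (1 - dl j / `|x j|) else x j.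
have hzs j : j \in s -> `|z j| = `|x j| - dl j /\ `|x j - z j| = dl j.
  move=> js; have h := dlx j js.
  have xj0 : 0 < `|x j| by apply: lt_trans h.
  have q0 : 0 < 1 - dl j / `|x j|.
    by rewrite subr_gt0 ltr_pdivrMr // mul1r.
  rewrite /z js; split.
    rewrite normrM (gtr0_norm q0) mulrBr mulr1 mulrCA mulfV ?mulr1 //.
    by rewrite gt_eqF.
  rewrite mulrBr mulr1 opprB addrCA subrr addr0.
  rewrite normrM (ger0_norm (divr_ge0 (ltW (dl0 j)) (ltW xj0))).
  by rewrite mulrCA mulfV ?mulr1 // gt_eqF.
have hzn j : j \notin s -> z j = x j by rewrite /z => /negbTE ->.
have hzle j : `|z j| <= `|x j|.
  case: (boolP (j \in s)) => js; last by rewrite hzn.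
  by have [-> _] := hzs j js; rewrite lerBlDr lerDl ltW.
have hlpz : in_lp a 2 z.
  have := hDl x Dx; rewrite /in_lp !wnorm2E //; apply: le_lt_trans.
  apply: gt0_ler_poweR; first by rewrite invr_ge0.
  - by rewrite in_itv /= leey andbT; apply: esum_ge0 => j _; rewrite lee_fin sqr_ge0.
  - by rewrite in_itv /= leey andbT; apply: esum_ge0 => j _; rewrite lee_fin sqr_ge0.
  apply: le_esum => j _; rewrite lee_fin.
  by rewrite ler_sqr ?nnegrE ?mulr_ge0 // ler_wpM2l.
have Dz : D z := hA2 x z Dx hlpz hzle.
have hm := hmin z Dz; rewrite /tikh Enx in hm.
pose M := \sum_(j <- s) (a j)^-2 * r j ^+ 2.
have M0 : 0 <= M by apply: sumr_ge0 => j _; exact: w_ge0.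
have ENx : wnorm r 1 x = (wnorm r 1 z + (sg * tau * M)%:E)%E.
  rewrite !wnorm1E //.
  rewrite (_ : sg * tau * M = \sum_(j <- s) (if j \in s then r j * dl j else 0)); last first.
    rewrite /M mulr_sumr big_seq [RHS]big_seq; apply: eq_bigr => j js.
    by rewrite js /dl /th; ring.
  rewrite -esum_fin_supp //; first last.
  - by move=> j /negbTE ->.
  - by move=> j; case: ifP => // _; rewrite mulr_ge0 // ltW.
  rewrite -esumD; first last.
  - by move=> j _; case: ifP => // _; rewrite lee_fin mulr_ge0 // ltW.
  - by move=> j _; rewrite lee_fin mulr_ge0.
  apply: eq_esum => j _; rewrite -EFinD; congr (_%:E).
  case: (boolP (j \in s)) => js; last by rewrite hzn // addr0.
  by have [-> _] := hzs j js; ring.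
have [nz [nz0 Enz]] : exists nz, 0 <= nz /\ wnorm r 1 z = nz%:E.
  move: ENx; rewrite Enx; have := wnorm1_ge0 r z.
  by case: (wnorm r 1 z) => [n| |] //= n0 _; exists n; split => //; rewrite -lee_fin.
rewrite Enz in hm.
have ENx2 : nx = nz + sg * tau * M by apply: EFin_inj; rewrite EFinD -Enz -Enx ENx.
rewrite -EFinM -EFinD -EFinM -EFinD lee_fin in hm.
have hxz : `|F x - F z| <= L * (sg * tau * Num.sqrt M).
  have h := hup x z Dx Dz.
  have hw : (wnorm a 2 (x \- z)%R <= (sg * tau * Num.sqrt M)%:E)%E.
    rewrite wnorm2E //; apply: poweR2_ge.
    - by apply: esum_ge0 => j _; rewrite lee_fin sqr_ge0.
    - by rewrite !mulr_ge0 ?sqrtr_ge0 // ltW.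
    rewrite (esum_fin_supp _ s) //; first last.
    - by move=> j /hzn /= ->; rewrite subrr normr0 mulr0 expr2 mulr0.
    - by move=> j; rewrite sqr_ge0.
    rewrite lee_fin exprMn sqr_sqrtr // /M mulr_sumr le_eqVlt; apply/orP; left.
    rewrite big_seq [X in _ == X]big_seq; apply/eqP; apply: eq_bigr => j js /=.
    have [_ ->] := hzs j js; rewrite /dl /th.
    by field; rewrite gt_eqF.
  rewrite -lee_fin EFinM; apply: le_trans h _.
  by apply: lee_wpmul2l; rewrite // lee_fin ltW.
have he' : `|F xp - F z| <= e + L * (sg * tau * Num.sqrt M).
  have -> : F xp - F z = (F xp - F x) + (F x - F z) by rewrite addrA subrK.
  exact: le_trans (ler_normD _ _) (lerD (lexx _) hxz).
set m := Num.sqrt M in hxz he'.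
have m0 : 0 <= m := sqrtr_ge0 M.
have Mm : M = m ^+ 2 by rewrite sqr_sqrtr.
have he2 : `|F xp - F z| ^+ 2 <= (e + L * (sg * tau * m)) ^+ 2.
  by rewrite ler_sqr ?nnegrE ?normr_ge0 // addr_ge0 // !mulr_ge0 // ltW.
rewrite ENx2 Mm in hm; rewrite -/M Mm.
have k1 : sg * tau ^+ 2 * m ^+ 2 <= e * L * sg * tau * m + L ^+ 2 * sg ^+ 2 * tau ^+ 2 * m ^+ 2 / 2.
  have : sg * tau ^+ 2 * m ^+ 2 * 2 <= (e + L * (sg * tau * m)) ^+ 2 - e ^+ 2.
    move: hm he2; rewrite -/e; lra.
  move=> h; rewrite -ler_pdivlMr // in h.
  by apply: (le_trans h); rewrite le_eqVlt; apply/orP; left; apply/eqP; field.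
have k2 : L ^+ 2 * sg ^+ 2 * tau ^+ 2 * m ^+ 2 <= sg * tau ^+ 2 * m ^+ 2.
  have -> : L ^+ 2 * sg ^+ 2 * tau ^+ 2 * m ^+ 2 = (sg * L ^+ 2) * (sg * tau ^+ 2 * m ^+ 2) by ring.
  by apply: ler_piMl => //; rewrite !mulr_ge0 ?sqr_ge0 // ltW.
have k3 : tau ^+ 2 * m ^+ 2 <= 2 * (e * L) * (tau * m).
  have : sg * (tau ^+ 2 * m ^+ 2 - 2 * (e * L) * (tau * m)) <= 0.
    have -> : sg * (tau ^+ 2 * m ^+ 2 - 2 * (e * L) * (tau * m)) =
      2 * (sg * tau ^+ 2 * m ^+ 2 - e * L * sg * tau * m - sg * tau ^+ 2 * m ^+ 2 / 2) by field.
    have : 0 <= 2 by [].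
    move: k1 k2; nra.
  by move=> h; nra.
have eL0 : 0 <= e * L by rewrite mulr_ge0 // ltW.
have y0 : 0 <= tau * m by rewrite mulr_ge0 // ltW.
have -> : tau ^+ 2 * m ^+ 2 = (tau * m) ^+ 2 by rewrite exprMn.
have -> : 4 * (L * e) ^+ 2 = (2 * (e * L)) ^+ 2 by ring.
move: k3; rewrite -exprMn.
case: (leP (tau * m) (2 * (e * L))) => hy.
  by move=> _; rewrite ler_sqr ?nnegrE // mulr_ge0.
move=> k3; have : (2 * (e * L)) * (tau * m) < (tau * m) * (tau * m).
  by rewrite ltr_pM2r // (le_lt_trans _ hy) // mulr_ge0.
by rewrite -expr2 ltNge k3.
Qed.

Lemma part_kt {Y : completeNormedModType R} (a r : Lam -> R)
  (D : set (Lam -> R)) (F : (Lam -> R) -> Y) (L tau : R) (xp x : Lam -> R) :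
  0 < L -> 0 < tau -> (forall j, 0 < a j) -> (forall j, 0 < r j) ->
  (D `<=` in_lp a 2) -> A2 a D ->
  (forall x1 x2, D x1 -> D x2 ->
     ((L^-1)%:E * wnorm a 2 (x1 \- x2)%R <= (`|F x1 - F x2|)%:E)%E /\
     ((`|F x1 - F x2|)%:E <= L%:E * wnorm a 2 (x1 \- x2)%R)%E) ->
  D xp -> in_lp r 1 xp -> is_argmin r D F xp tau x ->
  forall s, uniq s -> (forall j, j \in s -> (a j)^-2 * r j * tau < `|xp j|) ->
  tau ^+ 2 * \sum_(j <- s) (a j)^-2 * r j ^+ 2 <= 8 * (L * `|F xp - F x|) ^+ 2.
Proof.
move=> L0 tau0 a0 r0 hDl hA2 hlip Dxp hxp hmin s us hs.
have a0' : forall j, 0 <= a j by move=> j; exact: ltW.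
have Dx : D x by case: hmin.
set e := `|F xp - F x|.
have e0 : 0 <= e := normr_ge0 _.
have hQ := lip_lower_Q _ _ _ _ L0 e0 a0' (proj1 (hlip xp x Dxp Dx)).
rewrite (bigID (fun j => `|x j| <= `|xp j| / 2)) /= mulrDr.
have h1 : tau ^+ 2 * \sum_(j <- s | `|x j| <= `|xp j| / 2) (a j)^-2 * r j ^+ 2
    <= 4 * (L * e) ^+ 2.
  rewrite mulr_sumr.
  apply: (le_trans (y := \sum_(j <- s | `|x j| <= `|xp j| / 2)
            4 * (a j * `|xp j - x j|) ^+ 2)).
    rewrite big_seq_cond [X in _ <= X]big_seq_cond; apply: ler_sum => j /andP[js hP].
    have hj := hs j js.
    have hd : `|xp j| - `|x j| <= `|xp j - x j| := lerB_dist _ _.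
    have th0 : 0 < (a j)^-2 * r j * tau by rewrite !mulr_gt0 // invr_gt0 exprn_gt0.
    have k : a j * ((a j)^-2 * r j * tau / 2) <= a j * `|xp j - x j|.
      rewrite ler_wpM2l //; lra.
    have k2 : (a j * ((a j)^-2 * r j * tau / 2)) ^+ 2 <= (a j * `|xp j - x j|) ^+ 2.
      have pos : 0 <= a j * ((a j)^-2 * r j * tau / 2).
        by rewrite mulr_ge0 // divr_ge0 // ltW.
      by rewrite ler_sqr ?nnegrE //; apply: le_trans pos k.
    have E : tau ^+ 2 * ((a j)^-2 * r j ^+ 2) = 4 * (a j * ((a j)^-2 * r j * tau / 2)) ^+ 2.
      by field; rewrite gt_eqF.
    by rewrite E ler_wpM2l.
  rewrite -mulr_sumr ler_wpM2l //.
  apply: (le_trans (y := \sum_(j <- s) (a j * `|xp j - x j|) ^+ 2)).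
    rewrite [X in _ <= X](bigID (fun j => `|x j| <= `|xp j| / 2)) /=.
    by rewrite lerDl sumr_ge0 // => j _; rewrite sqr_ge0.
  rewrite -lee_fin; apply: le_trans hQ.
  exact: (seq_le_esum setT (fun j => (a j * `|xp j - x j|) ^+ 2) s us).
have h2 : tau ^+ 2 * \sum_(j <- s | ~~ (`|x j| <= `|xp j| / 2)) (a j)^-2 * r j ^+ 2
    <= 4 * (L * e) ^+ 2.
  rewrite -big_filter.
  apply: (group2 a r D F L tau xp x) => //.
  - by move=> x1 x2 D1 D2; exact: proj2 (hlip x1 x2 D1 D2).
  - exact: filter_uniq.
  move=> j; rewrite mem_filter => /andP[hP js].
  have := hs j js; rewrite -ltNge in hP; lra.
lra.
Qed.

Lemma kt_bound_of (a r xp : Lam -> R) (t Cst : R) : 0 < t -> 0 <= Cst ->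
  (forall b, 0 < b -> forall s, uniq s ->
     (forall j, j \in s -> (a j)^-2 * r j * b < `|xp j|) ->
     \sum_(j <- s) (a j)^-2 * r j ^+ 2 <= Cst * b `^ (- t)) ->
  (kt_norm a r t xp <= (Cst `^ t^-1)%:E)%E.
Proof.
move=> t0 C0 h; apply: ge_ereal_sup => _ [b /= b0 <-].
have hs : (kt_sum a r xp b <= (Cst * b `^ (- t))%:E)%E.
  by apply: esum_le_seq => s us hs; apply: h => // j /hs.
have hp : (poweR (kt_sum a r xp b) t^-1 <= poweR (Cst * b `^ (- t))%:E t^-1)%E.
  apply: gt0_ler_poweR => //; first by rewrite invr_ge0 ltW.
    by rewrite in_itv /= kt_sum_ge0 leey.
  by rewrite in_itv /= leey lee_fin mulr_ge0 ?powR_ge0.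
apply: le_trans (lee_wpmul2l _ hp) _; first by rewrite lee_fin ltW.
rewrite poweR_EFin -EFinM lee_fin.
rewrite powRM ?powR_ge0 // -powRrM mulNr mulfV ?gt_eqF // powR_inv1; last exact: ltW.
by rewrite mulrCA mulfV ?mulr1 // gt_eqF.
Qed.

Lemma powR_sq_half (al t : R) : 0 < al ->
  (al `^ ((2 - t) / 2)) ^+ 2 = al `^ (2 - t).
Proof.
move=> al0; rewrite -powR_mulrn ?powR_ge0 // -powRrM.
by congr (_ `^ _); field.
Qed.

Lemma powR_2mt (al t : R) : 0 < al -> al `^ (2 - t) = al * al `^ (1 - t).
Proof.
move=> al0; have -> : 2 - t = 1 + (1 - t) by ring.
by rewrite powRD ?(gt_eqF al0) ?implybT // powRr1 // ltW.
Qed.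

Lemma powR_2mt' (al t : R) : 0 < al -> al `^ (2 - t) = al ^+ 2 * al `^ (- t).
Proof.
move=> al0.
by rewrite powRD ?(gt_eqF al0) ?implybT // powR_mulrn // ltW.
Qed.

Lemma wnorm1_tri (r xp x : Lam -> R) : (forall j, 0 <= r j) ->
  (wnorm r 1 xp <= wnorm r 1 x + wnorm r 1 (xp \- x)%R)%E.
Proof.
move=> r0; rewrite !wnorm1E // -esumD; first last.
- by move=> j _; rewrite lee_fin mulr_ge0.
- by move=> j _; rewrite lee_fin mulr_ge0.
apply: le_esum => j _; rewrite -EFinD lee_fin /= -mulrDr ler_wpM2l //.
by have := ler_normD (x j) (xp j - x j); rewrite addrC subrK.
Qed.
End Aux.

Theorem theorem4p10 (R : realType) (L t : R) :
  0 < L -> 0 < t < 1 ->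
  exists c : R, 0 < c /\
  forall (Lam : countType) (a r : Lam -> R) (Y : completeNormedModType R)
         (D : set (Lam -> R)) (F : (Lam -> R) -> Y)
         (xp : Lam -> R) (xa : R -> Lam -> R),
    A1 a r D F L -> A2 a D ->
    D xp -> in_lp r 1 xp ->
    (forall alpha, 0 < alpha -> is_argmin r D F xp alpha (xa alpha)) ->
    let ii C2 := forall alpha, 0 < alpha ->
          (wnorm r 1 (xp \- xa alpha)%R <= (C2 * alpha `^ (1 - t))%:E)%E in
    let iii C3 := forall alpha, 0 < alpha ->
          `|F xp - F (xa alpha)| <= C3 * alpha `^ ((2 - t) / 2) in
    (* equivalences *)
    (in_kt a r t xp <-> exists C2, 0 < C2 /\ ii C2) /\
    ((exists C2, 0 < C2 /\ ii C2) <-> exists C3, 0 < C3 /\ iii C3) /\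
    (* quantitative statements *)
    (in_kt a r t xp -> ii (c * fine (kt_norm a r t xp) `^ t)) /\
    (forall C2, 0 < C2 -> ii C2 -> iii (Num.sqrt (2 * C2))) /\
    (forall C3, 0 < C3 -> iii C3 ->
       (kt_norm a r t xp <= (c * C3 `^ (2 / t))%:E)%E).
Proof.
move=> L0 tt; have ht := tt; move/andP: ht => [t0 t1].
pose c1 := (8 * L ^+ 2) `^ t^-1.
pose c2 := 2 * L ^+ 2 + 2 * Cl t.
have c10 : 0 <= c1 by exact: powR_ge0.
have c20 : 0 < c2.
  by apply: addr_gt0; apply: mulr_gt0 => //; [exact: exprn_gt0 | exact: Cl_gt0].
exists (c1 + c2); split; first by rewrite ltr_wpDl.
move=> Lam a r Y D F xp xa [[a0 r0] _ [hDl _] _ hlip] hA2 Dxp hxp hxa ii iii.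
have r0' : forall j, 0 <= r j by move=> j; exact: ltW.
have F1 : in_kt a r t xp -> ii ((c1 + c2) * fine (kt_norm a r t xp) `^ t).
  rewrite /in_kt => hk al al0.
  have kt0 : (0 <= kt_norm a r t xp)%E.
    apply: le_trans (_ : (1%:E * poweR (kt_sum a r xp 1) t^-1 <= _)%E).
      by rewrite mul1e poweR_ge0.
    by apply: ereal_sup_ubound; exists 1%R => //; exact: ltr01.
  have [K [K0 EK]] : exists K, 0 <= K /\ kt_norm a r t xp = K%:E.
    move: kt0 hk; case: (kt_norm a r t xp) => [k| |] //= k0 _.
    by exists k; split => //; rewrite -lee_fin.
  have hKle : (kt_norm a r t xp <= K%:E)%E by rewrite EK.
  rewrite EK /=.
  have := part_ii a r D F L t K al xp (xa al) L0 tt al0 K0 a0 r0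
    (proj1 (hlip _ _ Dxp (proj1 (hxa al al0)))) hxp (hxa al al0) Dxp
    hKle.
  move/le_trans; apply; rewrite lee_fin -/c2.
  rewrite -!mulrA; apply: ler_wpM2r; first by rewrite mulr_ge0 ?powR_ge0.
  by rewrite lerDr.
have F2 : forall C2, 0 < C2 -> ii C2 -> iii (Num.sqrt (2 * C2)).
  move=> C2 C20 hii al al0.
  have [np [nx [np0 nx0 Enp Enx htk]]] :=
    argmin_fin r D F al xp (xa al) al0 hxp (hxa al al0) Dxp.
  have htri := wnorm1_tri r xp (xa al) r0'.
  rewrite Enp Enx in htri.
  have hnp : np <= nx + C2 * al `^ (1 - t).
    rewrite -lee_fin EFinD; apply: le_trans htri _.
    by rewrite leeD2l // hii.
  set e := `|F xp - F (xa al)| in htk *.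
  have e0 : 0 <= e := normr_ge0 _.
  have he2 : e ^+ 2 <= 2 * C2 * al `^ (2 - t).
    rewrite powR_2mt //.
    have : al * (np - nx) <= al * (C2 * al `^ (1 - t)).
      by apply: ler_wpM2l; [exact: ltW | lra].
    lra.
  rewrite -ler_sqr ?nnegrE ?mulr_ge0 ?sqrtr_ge0 ?powR_ge0 //.
  by rewrite exprMn sqr_sqrtr ?powR_sq_half //; last by rewrite mulr_ge0 // ltW.
have F3 : forall C3, 0 < C3 -> iii C3 ->
    (kt_norm a r t xp <= ((c1 + c2) * C3 `^ (2 / t))%:E)%E.
  move=> C3 C30 hiii.
  have Cst0 : 0 <= 8 * L ^+ 2 * C3 ^+ 2.
    by apply: mulr_ge0; [apply: mulr_ge0 => //; exact: sqr_ge0 | exact: sqr_ge0].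
  apply: le_trans (kt_bound_of a r xp t (8 * L ^+ 2 * C3 ^+ 2) t0 Cst0 _) _.
    move=> b b0 s us hs.
    have hk := part_kt a r D F L b xp (xa b) L0 b0 a0 r0 hDl hA2 hlip Dxp hxp
      (hxa b b0) s us hs.
    have he := hiii b b0.
    have he2 : `|F xp - F (xa b)| ^+ 2 <= C3 ^+ 2 * (b ^+ 2 * b `^ (- t)).
      rewrite -powR_2mt' // -powR_sq_half // -exprMn.
      rewrite ler_sqr ?nnegrE //; apply: mulr_ge0; [exact: ltW | exact: powR_ge0].
    have b2 : 0 < b ^+ 2 by rewrite exprn_gt0.
    rewrite -(ler_pM2l b2).
    apply: le_trans hk _.
    rewrite exprMn.
    have : 0 <= L ^+ 2 by rewrite sqr_ge0.
    move: he2; set u := `|F xp - F (xa b)| ^+ 2; set v := b `^ (- t).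
    move=> he2 hL.
    have -> : b ^+ 2 * (8 * L ^+ 2 * C3 ^+ 2 * v) = 8 * L ^+ 2 * (C3 ^+ 2 * (b ^+ 2 * v)).
      by ring.
    by rewrite -mulrA ler_wpM2l // ler_wpM2l.
  have h8 : 0 <= 8 * L ^+ 2 by rewrite mulr_ge0 // sqr_ge0.
  rewrite lee_fin (powRM _ h8 (sqr_ge0 C3)) -/c1.
  have -> : (C3 ^+ 2) `^ t^-1 = C3 `^ (2 / t).
    by rewrite -powR_mulrn ?ltW // -powRrM.
  by rewrite ler_wpM2r ?powR_ge0 // lerDl ltW.
split.
  split.
    move=> hk; exists ((c1 + c2) * fine (kt_norm a r t xp) `^ t + 1); split.
      by apply: ltr_wpDl => //; apply: mulr_ge0; [exact: addr_ge0 (ltW c20) | exact: powR_ge0].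
    move=> al al0; apply: le_trans (F1 hk al al0) _.
    by rewrite lee_fin ler_wpM2r ?powR_ge0 // lerDl.
  move=> [C2 [C20 hii]].
  have s0 : 0 < Num.sqrt (2 * C2) by rewrite sqrtr_gt0 mulr_gt0.
  have := F3 _ s0 (F2 C2 C20 hii).
  rewrite /in_kt => h; apply: le_lt_trans h _; exact: ltry.
split.
  split.
    move=> [C2 [C20 hii]]; exists (Num.sqrt (2 * C2)); split.
      by rewrite sqrtr_gt0 mulr_gt0.
    exact: F2.
  move=> [C3 [C30 hiii]].
  have hk : in_kt a r t xp by rewrite /in_kt; apply: le_lt_trans (F3 C3 C30 hiii) _; exact: ltry.
  exists ((c1 + c2) * fine (kt_norm a r t xp) `^ t + 1); split.
    by apply: ltr_wpDl => //; apply: mulr_ge0; [exact: addr_ge0 (ltW c20) | exact: powR_ge0].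
  move=> al al0; apply: le_trans (F1 hk al al0) _.
  by rewrite lee_fin ler_wpM2r ?powR_ge0 // lerDl.
by split; [exact: F1 | split; [exact: F2 | exact: F3]].
Qed.
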